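(* If $(X,\asymp,B)$ is a prelength space, then $(\mathfrak{C}(X),\asymp,B')$ is a prelength space.
   Context: $\mathbb{Q}^+$ denotes the strictly positive rationals; all $\varepsilon,\delta$ (with indices) range over $\mathbb{Q}^+$. A metric space is a triple $(X,\asymp,B)$ where $\asymp$ is an equivalence relation on $X$ and $B$ assigns to each $\varepsilon\in\mathbb{Q}^+$ a binary relation $B_\varepsilon$ on $X$ respecting $\asymp$, such that: (1) each $B_\varepsilon$ is reflexive; (2) each $B_\varepsilon$ is symmetric; (3) if $B_{\varepsilon_1}(a,b)$ and $B_{\varepsilon_2}(b,c)$ then $B_{\varepsilon_1+\varepsilon_2}(a,c)$; (4) if $B_{\varepsilon+\delta}(a,b)$ for all $\delta$, then $B_\varepsilon(a,b)$; (5) if $B_\varepsilon(a,b)$ for all $\varepsilon$, then $a\asymp b$. A prelength space is a metric space such that for all $a,b,\varepsilon,\delta_1,\delta_2$ with $\varepsilon<\delta_1+\delta_2$ and $B_\varepsilon(a,b)$ there exists $c$ with $B_{\delta_1}(a,c)$ and $B_{\delta_2}(c,b)$. A regular function over $X$ is a function $x:\mathbb{Q}^+\to X$ such that $B_{\varepsilon_1+\varepsilon_2}(x(\varepsilon_1),x(\varepsilon_2))$ for all $\varepsilon_1,\varepsilon_2$. $\mathfrak{C}(X)$ is the set of regular functions over $X$; on it, $x\asymp y$ means $B_{2\varepsilon}(x(\varepsilon),y(\varepsilon))$ for all $\varepsilon$, and $B'_\varepsilon(x,y)$ means $B_{\varepsilon+\delta_1+\delta_2}(x(\delta_1),y(\delta_2))$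 for all $\delta_1,\delta_2$. *)

(* Defs.v *)
From mathcomp Require Import all_boot all_order all_algebra.
Set Implicit Arguments. Unset Strict Implicit. Unset Printing Implicit Defensive.
Import Order.TTheory GRing.Theory Num.Theory.
Local Open Scope ring_scope.

Record Qpos := mkQpos { qval : rat; qval_gt0 : 0 < qval }.

Definition qpadd (a b : Qpos) : Qpos := mkQpos (addr_gt0 (qval_gt0 a) (qval_gt0 b)).

Record is_metric (X : Type) (eqv : X -> X -> Prop) (B : Qpos -> X -> X -> Prop) : Prop := {
  eqv_refl : forall a, eqv a a;
  eqv_sym : forall a b, eqv a b -> eqv b a;
  eqv_trans : forall a b c, eqv a b -> eqv b c -> eqv a c;
  ball_respects : forall e a a' b b', eqv a a' -> eqv b b' -> B e a b -> B e a' b';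
  ball_refl : forall e a, B e a a;
  ball_sym : forall e a b, B e a b -> B e b a;
  ball_triangle : forall e1 e2 a b c, B e1 a b -> B e2 b c -> B (qpadd e1 e2) a c;
  ball_closed : forall e a b, (forall d, B (qpadd e d) a b) -> B e a b;
  ball_sep : forall a b, (forall e, B e a b) -> eqv a b
}.

Definition is_prelength (X : Type) (eqv : X -> X -> Prop) (B : Qpos -> X -> X -> Prop) : Prop :=
  is_metric eqv B /\
  forall (a b : X) (e d1 d2 : Qpos), qval e < qval d1 + qval d2 -> B e a b ->
    exists c, B d1 a c /\ B d2 c b.

Definition regular (X : Type) (B : Qpos -> X -> X -> Prop) (x : Qpos -> X) : Prop :=
  forall e1 e2, B (qpadd e1 e2) (x e1) (x e2).

Definition Compl (X : Type) (B : Qpos -> X -> X -> Prop) : Type :=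
  {x : Qpos -> X | regular B x}.

Definition Compl_eqv (X : Type) (B : Qpos -> X -> X -> Prop) (x y : Compl B) : Prop :=
  forall e, B (qpadd e e) (proj1_sig x e) (proj1_sig y e).

Definition Compl_ball (X : Type) (B : Qpos -> X -> X -> Prop) (e : Qpos) (x y : Compl B) : Prop :=
  forall d1 d2, B (qpadd (qpadd e d1) d2) (proj1_sig x d1) (proj1_sig y d2).

(* Main.v *)
Require Import Defs.
From mathcomp Require Import all_boot all_order all_algebra.
From mathcomp Require Import ring lra.
Import Order.TTheory GRing.Theory Num.Theory.
Local Open Scope ring_scope.

Lemma Qpos_eq (a b : Qpos) : qval a = qval b -> a = b.
Proof. case: a => a ha; case: b => b hb /= eab; subst b. by rewrite (bool_irrelevance ha hb). Qed.

Lemma frac_pos (r : rat) (k : nat) : 0 < r -> 0 < r / (k.+1)%:R.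
Proof. move=> h; apply: divr_gt0 => //; exact: ltr0Sn. Qed.

Definition qfrac (e : Qpos) (k : nat) : Qpos := mkQpos (@frac_pos _ k (qval_gt0 e)).

Section S.
Variables (X : Type) (eqv : X -> X -> Prop) (B : Qpos -> X -> X -> Prop).
Hypothesis HM : is_metric eqv B.

Lemma Beq e e' a b : qval e = qval e' -> B e a b -> B e' a b.
Proof. by move=> /Qpos_eq ->. Qed.
Arguments Beq {e e' a b}.

Lemma Bmono e e' a b : qval e <= qval e' -> B e a b -> B e' a b.
Proof.
move=> hle hB. case: (ltrP (qval e) (qval e')) => [hlt|hge].
- have hd : 0 < qval e' - qval e by rewrite subr_gt0.
  apply: (@Beq (qpadd e (mkQpos hd))); first by rewrite /=; lra.
  exact: (ball_triangle HM hB (ball_refl HM _ _)).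
- apply: (Beq _ hB). apply/eqP; rewrite eq_le hle hge //.
Qed.

Notation "x .[ d ]" := (proj1_sig x d).

Arguments Bmono {e e' a b}.

Lemma reg (x : Compl B) e1 e2 : B (qpadd e1 e2) x.[e1] x.[e2].
Proof. exact: (proj2_sig x). Qed.

Lemma eqv_ball (x y : Compl B) e : Compl_eqv x y -> Compl_ball e x y.
Proof.
move=> H d1 d2. pose h := qfrac e 3.
have := ball_triangle HM (ball_triangle HM (reg x d1 h) (H h)) (reg y h d2).
apply: Bmono => /=. lra.
Qed.

Lemma ball_eqv (x y : Compl B) : (forall e, Compl_ball e x y) -> Compl_eqv x y.
Proof.
move=> H e. apply: (ball_closed HM) => d.
apply: (Beq _ (H d e e)) => /=. lra.
Qed.

Lemma cball_tri (x y z : Compl B) e1 e2 :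
  Compl_ball e1 x y -> Compl_ball e2 y z -> Compl_ball (qpadd e1 e2) x z.
Proof.
move=> H1 H2 d1 d2. apply: (ball_closed HM) => d. pose h := qfrac d 1.
have := ball_triangle HM (H1 d1 h) (H2 h d2).
apply: Bmono => /=. lra.
Qed.

Lemma cball_closed (x y : Compl B) e :
  (forall d, Compl_ball (qpadd e d) x y) -> Compl_ball e x y.
Proof.
move=> H d1 d2. apply: (ball_closed HM) => d.
apply: (Beq _ (H d d1 d2)) => /=. lra.
Qed.

Lemma cball_eq (x y : Compl B) e e' : qval e = qval e' -> Compl_ball e x y -> Compl_ball e' x y.
Proof. by move=> /Qpos_eq ->. Qed.

Lemma compl_metric : is_metric (@Compl_eqv X B) (@Compl_ball X B).
Proof.
split.
- move=> a e; exact: reg.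
- move=> a b H e; exact: (ball_sym HM (H e)).
- move=> a b c H1 H2; apply: ball_eqv => e.
  apply: (@cball_eq _ _ (qpadd (qfrac e 1) (qfrac e 1))); first by rewrite /=; lra.
  apply: cball_tri; exact: eqv_ball.
- move=> e a a' b b' Ha Hb H. apply: cball_closed => d.
  apply: (@cball_eq _ _ (qpadd (qpadd (qfrac d 1) e) (qfrac d 1))); first by rewrite /=; lra.
  apply: cball_tri; last exact: eqv_ball.
  apply: cball_tri H. apply: eqv_ball => f. exact: (ball_sym HM (Ha f)).
- move=> e a d1 d2. apply: Bmono (reg a d1 d2) => /=.
  have := qval_gt0 e; lra.
- move=> e a b H d1 d2. apply: (ball_sym HM).
  apply: (Beq _ (H d2 d1)) => /=. lra.
- move=> e1 e2 a b c; exact: cball_tri.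
- move=> e a b H. exact: cball_closed.
- move=> a b H. exact: ball_eqv.
Qed.

End S.
Arguments Bmono {X eqv B} HM {e e' a b}.

Theorem theorem9 (X : Type) (eqv : X -> X -> Prop) (B : Qpos -> X -> X -> Prop) :
  is_prelength eqv B -> is_prelength (@Compl_eqv X B) (@Compl_ball X B).
Proof.
move=> [HM PL]. split; first exact: (@compl_metric _ _ _ HM).
move=> x y e d1 d2 hlt hxy.
set g := qval d1 + qval d2 - qval e.
set m := Num.min (Num.min (qval d1) (qval d2)) g.
have hg : 0 < g by rewrite /g; lra.
have hm0 : 0 < m by rewrite /m !lt_min !qval_gt0 hg.
have : m <= m by [].
rewrite {2}/m !le_min => /andP[/andP[hm1 hm2] hm3].
have hgd : g = qval d1 + qval d2 - qval e by [].
have ha : 0 < m / 5 by lra.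
pose a := mkQpos ha.
have h1 : 0 < qval d1 - m / 5 by have := qval_gt0 d1; lra.
have h2 : 0 < qval d2 - m / 5 by have := qval_gt0 d2; lra.
have hxy' := hxy a a.
have hlt' : qval (qpadd (qpadd e a) a) < qval (mkQpos h1) + qval (mkQpos h2) by rewrite /=; lra.
have [c [hc1 hc2]] := PL _ _ _ _ _ hlt' hxy'.
exists (exist (regular B) (fun _ : Qpos => c) (fun e1 e2 => ball_refl HM (qpadd e1 e2) c)).
split => d d' /=.
- apply: (Bmono HM _ (ball_triangle HM (proj2_sig x d a) hc1)) => /=.
  have := qval_gt0 d'; lra.
- apply: (Bmono HM _ (ball_triangle HM hc2 (proj2_sig y a d'))) => /=.
  have := qval_gt0 d; lra.
Qed.
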